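(* The operator $\log S^t=\sum_{k=1}^\infty\frac{(-1)^{k-1}}{k}(S^t-1)^k$ is well defined on $\mathfrak{h}^1[t]$ (on each word only finitely many terms are nonzero), and for every word $w$ of length $n$, \[(\log S^t)(w)=t\sum_{r\in R_n,\ \sigma(r)=1}\mathrm{Con}_r(w)=t\,(\log S)(w),\] where $S=S^1$ is obtained by substituting $t=1$.
   Context: Let $\mathfrak{A}$ be a commutative $\mathbb{Q}$-algebra, $A$ a set of letters, and $\mathfrak{h}^1$ the non-commutative polynomial algebra over $\mathfrak{A}$ in the letters of $A$ (the free $\mathfrak{A}$-module on words, i.e. finite sequences of letters including the empty word $1$, with concatenation product). Let $\mathfrak{z}\subset\mathfrak{h}^1$ be the $\mathfrak{A}$-submodule spanned by $A$, and assume $\mathfrak{z}$ carries a commutative associative (not necessarily unital) $\mathfrak{A}$-bilinear product $\circ\colon\mathfrak{z}\times\mathfrak{z}\to\mathfrak{z}$. This is extended to an action of $\mathfrak{z}$ on $\mathfrak{h}^1$ by $a\circ 1=0$ and $a\circ(bw)=(a\circ b)w$ for $a,b\in A$ and words $w$, extended $\mathfrak{A}$-bilinearly. Let $t$ be an indeterminate, $\mathfrak{h}^1[t]=\mathfrak{h}^1\otimes_{\mathbb{Q}}\mathbb{Q}[t]$, with all structures extended $\mathfrak{A}[t]$-linearly. Define the $\mathfrak{A}[t]$-linear operator $S^t$ on $\mathfrak{h}^1[t]$ by $S^t(1)=1$ and $S^t(aw)=aS^t(w)+t\,a\circ S^t(w)$ for $a\in A$ and words $w$; for an element $\alpha$ of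 a commutative $\mathfrak{A}$-algebra, $S^\alpha$ denotes the operator obtained by substituting $\alpha$ for $t$. For $n\geq 0$, let $R_n$ be the set of strictly increasing sequences $r=(r_0,\ldots,r_s)$ of integers in $\{0,\ldots,n\}$ with $r_0=0$, $r_s=n$; put $\sigma(r)=n-s$. For a word $w=a_1\cdots a_n$, $\mathrm{Con}_r(w)=b_1\cdots b_s$ with $b_i=a_{r_{i-1}+1}\circ\cdots\circ a_{r_i}$. *)

(* Defs.v *)
From HB Require Import structures.
From mathcomp Require Import all_boot all_order all_algebra.
Set Implicit Arguments. Unset Strict Implicit. Unset Printing Implicit Defensive.
Import Order.TTheory GRing.Theory Num.Theory.
Local Open Scope ring_scope.

(* Finite formal K-linear combinations of elements of T (elements of the free
   K-module on T), represented as lists of (coefficient, basis element). *)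
Definition Lin (K : Type) (T : Type) := seq (K * T).

Definition coefL (K : nmodType) (T : eqType) (x : Lin K T) (u : T) : K :=
  \sum_(p <- x | p.2 == u) p.1.

Definition eqL (K : nmodType) (T : eqType) (x y : Lin K T) : Prop :=
  forall u, coefL x u = coefL y u.
Notation "x =L y" := (eqL x y) (at level 70).

Definition scaleL (K : pzSemiRingType) (T : Type) (c : K) (x : Lin K T) : Lin K T :=
  [seq (c * p.1, p.2) | p <- x].

Definition oppL (K : pzRingType) (T : Type) (x : Lin K T) : Lin K T :=
  [seq (- p.1, p.2) | p <- x].

Definition mapL (K K' : Type) (T : Type) (f : K -> K') (x : Lin K T) : Lin K' T :=
  [seq (f p.1, p.2) | p <- x].

Section Ops.
Variables (K : comPzRingType) (A : eqType).
Variable circ : A -> A -> Lin K A.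

Definition circL (x y : Lin K A) : Lin K A :=
  flatten [seq [seq (p.1 * q.1 * r.1, r.2) | r <- circ p.2 q.2] | p <- x, q <- y].

Definition circW (a : A) (w : seq A) : Lin K (seq A) :=
  if w is b :: w' then [seq (r.1, r.2 :: w') | r <- circ a b] else [::].

Fixpoint Sword (t : K) (w : seq A) : Lin K (seq A) :=
  match w with
  | [::] => [:: (1, [::])]
  | a :: w' =>
      let s := Sword t w' in
      [seq (p.1, a :: p.2) | p <- s] ++
      flatten [seq scaleL (t * p.1) (circW a p.2) | p <- s]
  end.

Definition SL (t : K) (x : Lin K (seq A)) : Lin K (seq A) :=
  flatten [seq scaleL p.1 (Sword t p.2) | p <- x].

Definition Dop (t : K) (x : Lin K (seq A)) : Lin K (seq A) := SL t x ++ oppL x.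

Definition Dpow (t : K) (k : nat) (w : seq A) : Lin K (seq A) :=
  iter k (Dop t) [:: (1, w)].

Definition logpart (c : nat -> K) (t : K) (N : nat) (w : seq A) : Lin K (seq A) :=
  flatten [seq scaleL (c k) (Dpow t k w) | k <- iota 1 N].

Definition circs (l : seq A) : Lin K A :=
  if l is a :: l' then foldl (fun x b => circL x [:: (1, b)]) [:: (1, a)] l'
  else [::].

Definition prodz (bs : seq (Lin K A)) : Lin K (seq A) :=
  foldr (fun b acc => [seq (p.1 * q.1, p.2 :: q.2) | p <- b, q <- acc])
        [:: (1, [::])] bs.

(* Con_r(w) with b_i = a_{r_{i-1}+1} o ... o a_{r_i} *)
Definition Con (r : seq nat) (w : seq A) : Lin K (seq A) :=
  prodz (pairmap (fun i j => circs (take (j - i) (drop i w))) (head 0%N r) (behead r)).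

End Ops.

Definition inRn (n : nat) (r : seq nat) : bool :=
  [&& r != [::], sorted ltn r, all (fun i => i <= n)%N r,
      head 1%N r == 0%N & last 0%N r == n].

(* enumeration of R_n: all subsequences of (0,1,...,n) lying in R_n
   (every strictly increasing sequence in {0..n} is such a subsequence,
   obtained from a unique mask) *)
Definition Rn (n : nat) : seq (seq nat) :=
  [seq r <- [seq mask (tval m) (iota 0 n.+1) | m : (n.+1).-tuple bool] | inRn n r].

Definition sigma (n : nat) (r : seq nat) : nat := (n - (size r).-1)%N.

Definition sumCon (K : comPzRingType) (A : eqType) (circ : A -> A -> Lin K A)
  (w : seq A) : Lin K (seq A) :=
  flatten [seq Con circ r w | r <- Rn (size w) & sigma (size w) r == 1%N].

Definition logcoef (R : comAlgType rat) (k : nat) : R :=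
  (((-1) ^+ k.-1 / k%:R : rat) *: (1 : R)).

Definition circT (R : comAlgType rat) (A : eqType) (circ : A -> A -> Lin R A) :
  A -> A -> Lin {poly R} A := fun a b => mapL (fun c => c%:P) (circ a b).

(* Main.v *)
Require Import Defs.
From HB Require Import structures.
From mathcomp Require Import all_boot all_order all_algebra.
From mathcomp Require Import zify.
From Stdlib Require Import FunctionalExtensionality.
Import GRing.Theory.
Local Open Scope ring_scope.

Set Implicit Arguments. Unset Strict Implicit. Unset Printing Implicit Defensive.

Section Pair.
Variable K : comPzRingType.

Definition pr (T : Type) (x : Lin K T) (h : T -> K) : K := \sum_(p <- x) p.1 * h p.2.

Lemma pr_nil T (h : T -> K) : pr [::] h = 0. Proof. by rewrite /pr big_nil. Qed.
Lemma pr_cons T p (x : Lin K T) h : pr (p :: x) h = p.1 * h p.2 + pr x h.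
Proof. by rewrite /pr big_cons. Qed.
Lemma pr_cat T (x y : Lin K T) h : pr (x ++ y) h = pr x h + pr y h.
Proof. by rewrite /pr big_cat. Qed.
Lemma pr_seq1 T c (u : T) h : pr [:: (c, u)] h = c * h u.
Proof. by rewrite /pr big_seq1. Qed.
Lemma pr_flatten T (s : seq (Lin K T)) h : pr (flatten s) h = \sum_(x <- s) pr x h.
Proof. by rewrite /pr big_flatten. Qed.
Lemma pr_scale T c (x : Lin K T) h : pr (scaleL c x) h = c * pr x h.
Proof. by rewrite /pr big_map mulr_sumr; apply: eq_bigr => p _ /=; rewrite mulrA. Qed.
Lemma pr_opp T (x : Lin K T) h : pr (oppL x) h = - pr x h.
Proof. by rewrite /pr big_map -sumrN; apply: eq_bigr => p _ /=; rewrite mulNr. Qed.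
Lemma pr_relab T T' (g : T -> T') (x : Lin K T) h :
  pr [seq (p.1, g p.2) | p <- x] h = pr x (fun u => h (g u)).
Proof. by rewrite /pr big_map. Qed.
Lemma pr_add T (x : Lin K T) f g : pr x (fun u => f u + g u) = pr x f + pr x g.
Proof. by rewrite /pr -big_split; apply: eq_bigr => p _; rewrite mulrDr. Qed.
Lemma pr_sub T (x : Lin K T) f g : pr x (fun u => f u - g u) = pr x f - pr x g.
Proof. by rewrite /pr -sumrB; apply: eq_bigr => p _; rewrite mulrBr. Qed.
Lemma pr_mul T (x : Lin K T) c f : pr x (fun u => c * f u) = c * pr x f.
Proof. by rewrite /pr mulr_sumr; apply: eq_bigr => p _; rewrite mulrCA. Qed.
Lemma pr0 T (x : Lin K T) : pr x (fun _ => 0) = 0.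
Proof. by rewrite /pr big1 // => p _; rewrite mulr0. Qed.
Lemma pr_eqf T (x : Lin K T) f g : (forall u, f u = g u) -> pr x f = pr x g.
Proof. by move=> e; apply: eq_bigr => p _; rewrite e. Qed.
Lemma pr_swap T T' (x : Lin K T) (y : Lin K T') H :
  pr x (fun u => pr y (fun v => H u v)) = pr y (fun v => pr x (fun u => H u v)).
Proof.
rewrite /pr; under eq_bigr do rewrite mulr_sumr.
rewrite exchange_big; apply: eq_bigr => q _; rewrite mulr_sumr.
by apply: eq_bigr => p _; rewrite mulrCA.
Qed.

Section Eq.
Variable T : eqType.
Lemma pr_vanish (x : Lin K T) f : (forall p, p \in x -> f p.2 = 0) -> pr x f = 0.
Proof. by move=> H; rewrite /pr big_seq big1 // => p /H ->; rewrite mulr0. Qed.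
Definition delta (v : T) : T -> K := fun u => (u == v)%:R.
Lemma pr_delta (x : Lin K T) v : pr x (delta v) = coefL x v.
Proof.
rewrite /pr /coefL /delta [RHS]big_mkcond; apply: eq_bigr => p _.
by case: (p.2 == v); rewrite ?mulr1 ?mulr0.
Qed.

Lemma pr_support (x : Lin K T) (s : seq T) h : uniq s -> (forall p, p \in x -> p.2 \in s) ->
  pr x h = \sum_(u <- s) coefL x u * h u.
Proof.
move=> us sub; rewrite /coefL.
transitivity (\sum_(u <- s) \sum_(p <- x) (p.2 == u)%:R * (p.1 * h u)).
  rewrite exchange_big /pr big_seq [RHS]big_seq; apply: eq_bigr => p px.
  rewrite (bigD1_seq p.2) ?sub //= eqxx mul1r big1 ?addr0 // => u.
  by rewrite eq_sym => /negbTE ->; rewrite mul0r.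
apply: eq_bigr => u _; rewrite [in RHS]big_mkcond mulr_suml; apply: eq_bigr => p _.
by case: (p.2 == u); rewrite ?mul1r ?mul0r.
Qed.

Lemma pr_eqL (x y : Lin K T) h : x =L y -> pr x h = pr y h.
Proof.
move=> e; set s := undup [seq p.2 | p <- x ++ y].
have us : uniq s by apply: undup_uniq.
rewrite (@pr_support x s) // ?(@pr_support y s) //.
- by apply: eq_bigr => u _; rewrite e.
- by move=> p py; rewrite mem_undup; apply/mapP; exists p => //; rewrite mem_cat py orbT.
- by move=> p px; rewrite mem_undup; apply/mapP; exists p => //; rewrite mem_cat px.
Qed.

Lemma eqL_pr (x y : Lin K T) : (forall v, pr x (delta v) = pr y (delta v)) -> x =L y.
Proof. by move=> H u; rewrite -!pr_delta. Qed.
End Eq.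
End Pair.


Section Words.
Variables (K : comPzRingType) (A : eqType) (circ : A -> A -> Lin K A).

Fixpoint Dw (w : seq A) : Lin K (seq A) :=
  match w with
  | [::] => [::]
  | a :: w' => [seq (p.1, a :: p.2) | p <- Dw w'] ++ circW circ a w'
  end.

Lemma prC0 a (h : seq A -> K) : pr (circW circ a [::]) h = 0.
Proof. by rewrite pr_nil. Qed.
Lemma prC1 a b w (h : seq A -> K) :
  pr (circW circ a (b :: w)) h = pr (circ a b) (fun l => h (l :: w)).
Proof. by rewrite /circW (pr_relab (fun l => l :: w)). Qed.
Lemma prD0 (h : seq A -> K) : pr (Dw [::]) h = 0.
Proof. by rewrite pr_nil. Qed.
Lemma prD1 a w (h : seq A -> K) :
  pr (Dw (a :: w)) h = pr (Dw w) (fun u => h (a :: u)) + pr (circW circ a w) h.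
Proof. by rewrite /= pr_cat (pr_relab (cons a)). Qed.

Lemma prS0 t (h : seq A -> K) : pr (Sword circ t [::]) h = h [::].
Proof. by rewrite /= pr_seq1 mul1r. Qed.
Lemma prS1 t a w (h : seq A -> K) :
  pr (Sword circ t (a :: w)) h = pr (Sword circ t w) (fun u => h (a :: u))
    + t * pr (Sword circ t w) (fun u => pr (circW circ a u) h).
Proof.
rewrite /= pr_cat (pr_relab (cons a)) pr_flatten big_map; congr (_ + _).
rewrite /pr mulr_sumr; apply: eq_bigr => p _.
by rewrite -/(pr _ _) pr_scale mulrA.
Qed.

Lemma pr_circL (x y : Lin K A) g :
  pr (circL circ x y) g = pr x (fun a => pr y (fun b => pr (circ a b) g)).
Proof.
rewrite /circL pr_flatten big_allpairs_dep /pr; apply: eq_bigr => p _.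
rewrite mulr_sumr; apply: eq_bigr => q _.
rewrite big_map mulr_sumr mulr_sumr; apply: eq_bigr => r _ /=.
by rewrite !mulrA.
Qed.

Lemma pr_circ_assoc :
  (forall a b c : A,
     circL circ (circ a b) [:: (1, c)] =L circL circ [:: (1, a)] (circ b c)) ->
  forall a b v (h : seq A -> K),
  pr (circ a b) (fun l => pr (circW circ l v) h) =
  pr (circW circ b v) (fun u => pr (circW circ a u) h).
Proof.
move=> ass a b [|c v] h.
  rewrite (@pr_eqf _ _ _ _ (fun _ => 0)) ?pr0 ?pr_nil // => l; exact: prC0.
rewrite prC1 (@pr_eqf _ _ _ _ (fun l => pr (circ l c) (fun m => h (m :: v)))); last by move=> l; rewrite prC1.
rewrite (@pr_eqf _ _ (circ b c) _ (fun l => pr (circ a l) (fun m => h (m :: v)))); last by move=> l; rewrite prC1.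
have := pr_eqL (fun l => h (l :: v)) (ass a b c).
rewrite !pr_circL pr_seq1 mul1r => E; rewrite -E.
by apply: pr_eqf => l; rewrite pr_seq1 mul1r.
Qed.

Definition St t (h : seq A -> K) := fun u => pr (Sword circ t u) h.
Definition Dt (h : seq A -> K) := fun u => pr (Dw u) h.
Definition Ct a (h : seq A -> K) := fun u => pr (circW circ a u) h.

Hypothesis ass : forall a b c : A,
     circL circ (circ a b) [:: (1, c)] =L circL circ [:: (1, a)] (circ b c).

Lemma M1 a v h : pr (circW circ a v) (Dt h) = pr (Dw v) (Ct a h).
Proof.
case: v => [|b v]; first by rewrite /= !pr_nil.
rewrite prC1 prD1 /Dt.
under pr_eqf => l do rewrite prD1.
rewrite pr_add; congr (_ + _).
  rewrite pr_swap; apply: pr_eqf => u; by rewrite /Ct prC1.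
exact: (pr_circ_assoc ass).
Qed.

Lemma M2 t a w h : pr (circW circ a w) (St t h) = pr (Sword circ t w) (Ct a h).
Proof.
case: w => [|b w]; first by rewrite prC0 prS0 /Ct prC0.
rewrite prC1 prS1 /St.
under pr_eqf => l do rewrite prS1.
rewrite pr_add pr_mul; congr (_ + _ * _).
  rewrite pr_swap; apply: pr_eqf => u; by rewrite /Ct prC1.
rewrite pr_swap; apply: pr_eqf => u.
by rewrite /Ct (pr_circ_assoc ass).
Qed.

Lemma M3 t u h : pr (Sword circ t u) (Dt h) = pr (Dw u) (St t h).
Proof.
elim: u h => [|a w IH] h; first by rewrite prS0 /Dt !prD0.
rewrite prS1 prD1.
under pr_eqf => v do rewrite /Dt prD1.
under [X in _ + _ * X]pr_eqf => v do rewrite -/(Dt h) M1.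
rewrite pr_add.
under [in RHS]pr_eqf => v do rewrite /St prS1.
rewrite pr_add pr_mul.
rewrite -/(Dt (fun u => h (a :: u))) IH.
rewrite -/(Ct a h) -/(Dt (Ct a h)) IH.
rewrite -/(St t h) M2.
rewrite /St.
by rewrite addrAC.
Qed.
End Words.


Section Iter.
Variables (K : comPzRingType) (A : eqType) (circ : A -> A -> Lin K A).

Definition Ut t (h : seq A -> K) := fun u => St circ t h u - h u.

Lemma pr_Dop t x h : pr (Dop circ t x) h = pr x (Ut t h).
Proof.
rewrite /Dop pr_cat pr_opp /Ut pr_sub; congr (_ - _).
rewrite /SL pr_flatten big_map /pr; apply: eq_bigr => p _.
by rewrite -/(pr _ _) pr_scale.
Qed.

Lemma pr_iterDop t k x h : pr (iter k (Dop circ t) x) h = pr x (iter k (Ut t) h).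
Proof. by elim: k h => [|k IH] h //; rewrite iterS pr_Dop IH -iterSr. Qed.

Lemma pr_Dpow t k w h : pr (Dpow circ t k w) h = iter k (Ut t) h w.
Proof. by rewrite /Dpow pr_iterDop pr_seq1 mul1r. Qed.

Lemma pr_logpart c t N w h :
  pr (logpart circ c t N w) h = \sum_(k <- iota 1 N) c k * iter k (Ut t) h w.
Proof.
rewrite /logpart pr_flatten big_map; apply: eq_bigr => k _.
by rewrite pr_scale pr_Dpow.
Qed.

Lemma C_support a v (f : seq A -> K) :
  (forall z, size z = size v -> f z = 0) -> pr (circW circ a v) f = 0.
Proof.
case: v => [|b v] H; first by rewrite prC0.
rewrite prC1 (@pr_eqf _ _ _ _ (fun _ => 0)) ?pr0 // => l; exact: H.
Qed.

Lemma S_support t u (f : seq A -> K) :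
  (forall v, (size v < size u)%N -> f v = 0) -> pr (Sword circ t u) f = f u.
Proof.
elim: u f => [|a w IH] f H; first by rewrite prS0.
rewrite prS1 IH; last by move=> v Hv; apply: H.
rewrite IH; last by move=> v Hv; apply: C_support => z Hz; apply: H; rewrite Hz /= ltnS ltnW.
by rewrite C_support ?mulr0 ?addr0 // => z Hz; apply: H; rewrite Hz.
Qed.

Lemma NIL t k h u : (size u < k)%N -> iter k (Ut t) h u = 0.
Proof.
elim: k u => [|k IH] u //= Hu.
rewrite /Ut /St S_support ?subrr // => v Hv; apply: IH.
by apply: leq_trans Hv _.
Qed.

Lemma D_support w (f : seq A -> K) :
  (forall v, (size v < size w)%N -> f v = 0) -> pr (Dw circ w) f = 0.
Proof.
elim: w f => [|a w IH] f H; first by rewrite prD0.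
rewrite prD1 IH ?add0r; last by move=> v Hv; apply: H.
by apply: C_support => z Hz; apply: H; rewrite Hz.
Qed.

Lemma S_t0 u (f : seq A -> K) : pr (Sword circ 0 u) f = f u.
Proof.
elim: u f => [|a w IH] f; first by rewrite prS0.
by rewrite prS1 mul0r addr0 IH.
Qed.

Lemma Ut0 k h u : (0 < k)%N -> iter k (Ut 0) h u = 0.
Proof.
case: k => // k _; rewrite iterS /Ut /St S_t0 subrr //.
Qed.
End Iter.


Section Transport.
Variables (K K' : comPzRingType) (f : {rmorphism K -> K'}) (A : eqType) (circ : A -> A -> Lin K A).

Definition mapc := fun a b => mapL f (circ a b).

Lemma tr_pr T (x : Lin K T) h : f (pr x h) = pr (mapL f x) (fun u => f (h u)).
Proof.
rewrite /pr rmorph_sum big_map; apply: eq_bigr => p _; by rewrite rmorphM.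
Qed.

Lemma tr_coef (T : eqType) (x : Lin K T) v : coefL (mapL f x) v = f (coefL x v).
Proof.
rewrite -!pr_delta tr_pr; apply: pr_eqf => u; by rewrite /delta rmorph_nat.
Qed.

Lemma tr_C a v h : f (pr (circW circ a v) h) = pr (circW mapc a v) (fun u => f (h u)).
Proof.
case: v => [|b v]; first by rewrite !prC0 rmorph0.
by rewrite !prC1 tr_pr.
Qed.

Lemma tr_S t u h : f (pr (Sword circ t u) h) = pr (Sword mapc (f t) u) (fun u => f (h u)).
Proof.
elim: u h => [|a w IH] h; first by rewrite !prS0.
rewrite !prS1 rmorphD rmorphM !IH; congr (_ + _ * _).
by apply: pr_eqf => u; rewrite tr_C.
Qed.

Lemma tr_D u h : f (pr (Dw circ u) h) = pr (Dw mapc u) (fun u => f (h u)).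
Proof.
elim: u h => [|a w IH] h; first by rewrite !prD0 rmorph0.
by rewrite !prD1 rmorphD IH tr_C.
Qed.

Lemma tr_U t k h : (fun u => f (iter k (Ut circ t) h u)) = iter k (Ut mapc (f t)) (fun u => f (h u)).
Proof.
elim: k => [|k IH] //; rewrite !iterS -IH; apply: functional_extensionality => u.
by rewrite /Ut /St rmorphB tr_S.
Qed.
End Transport.

Lemma tr_ass (K K' : comPzRingType) (f : {rmorphism K -> K'}) (A : eqType) (circ : A -> A -> Lin K A) :
  (forall a b c : A,
     circL circ (circ a b) [:: (1, c)] =L circL circ [:: (1, a)] (circ b c)) ->
  (forall a b c : A,
     circL (mapc f circ) (mapc f circ a b) [:: (1, c)] =L
     circL (mapc f circ) [:: (1, a)] (mapc f circ b c)).
Proof.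
move=> ass a b c.
have E1 : [:: (1 : K', c)] = mapL f [:: (1, c)] by rewrite /mapL /= rmorph1.
have E2 : [:: (1 : K', a)] = mapL f [:: (1, a)] by rewrite /mapL /= rmorph1.
have key : forall x y v, coefL (circL (mapc f circ) (mapL f x) (mapL f y)) v =
    f (coefL (circL circ x y) v).
  move=> x y v; rewrite -!pr_delta !pr_circL [RHS]tr_pr.
  apply: pr_eqf => a'; rewrite [RHS]tr_pr; apply: pr_eqf => b'; rewrite [RHS]tr_pr.
  by apply: pr_eqf => l; rewrite /delta rmorph_nat.
move=> v; rewrite E1 E2 /mapc.
rewrite (key (circ a b) [:: (1, c)] v) (key [:: (1, a)] (circ b c) v).
by rewrite ass.
Qed.


Section Deriv.
Variables (R : comAlgType rat) (A : eqType) (circ : A -> A -> Lin R A).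
Hypothesis ass : forall a b c : A,
     circL circ (circ a b) [:: (1, c)] =L circL circ [:: (1, a)] (circ b c).

Definition pd T (x : Lin {poly R} T) (h : T -> {poly R}) := \sum_(p <- x) p.1^`() * h p.2.

Lemma deriv_pr T (x : Lin {poly R} T) h : (pr x h)^`() = pd x h + pr x (fun u => (h u)^`()).
Proof.
rewrite /pr /pd (big_morph _ (@derivD _) (@deriv0 _)) -big_split.
by apply: eq_bigr => p _; rewrite derivM.
Qed.

Lemma assC : forall a b c : A,
  circL (circT circ) (circT circ a b) [:: (1, c)] =L circL (circT circ) [:: (1, a)] (circT circ b c).
Proof. exact: (tr_ass polyC ass). Qed.

Lemma dC a v h : pd (circW (circT circ) a v) h = 0.
Proof.
case: v => [|b v]; first by rewrite /pd big_nil.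
rewrite /pd /circW /circT /mapL !big_map big1 // => r _ /=.
by rewrite derivC mul0r.
Qed.

Lemma pd_scale T c (y : Lin {poly R} T) h : pd (scaleL c y) h = c^`() * pr y h + c * pd y h.
Proof.
rewrite /pd /pr big_map mulr_sumr mulr_sumr -big_split; apply: eq_bigr => q _ /=.
by rewrite derivM mulrDl !mulrA.
Qed.

Lemma dS u h : pd (Sword (circT circ) 'X u) h = pr (Sword (circT circ) 'X u) (Dt (circT circ) h).
Proof.
elim: u h => [|a w IH] h.
  by rewrite prS0 /Dt prD0 /pd /= big_seq1 -polyC1 derivC mul0r.
rewrite prS1.
rewrite /pd /= big_cat big_map /= -/(pd (Sword (circT circ) 'X w) (fun u => h (a :: u))).
rewrite big_flatten /= big_map.
under eq_bigr => p _ do rewrite -/(pd _ _) pd_scale dC mulr0 addr0 derivM derivX mul1r.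
rewrite IH.
under [in RHS]pr_eqf => v do rewrite /Dt prD1.
rewrite pr_add.
under [X in _ = _ + _ * X]pr_eqf => v do rewrite -/(Dt (circT circ) h) (M1 assC).
rewrite -addrA; congr (_ + _).
rewrite /pr. under eq_bigr => p _ do rewrite mulrDl.
rewrite big_split /=; congr (_ + _).
rewrite -[X in _ = 'X * X]/(pr (Sword (circT circ) 'X w) (Dt (circT circ) (Ct (circT circ) a h))).
rewrite -IH /pd mulr_sumr; apply: eq_bigr => p _.
by rewrite mulrA.
Qed.
End Deriv.


Lemma logcoefK (R : comAlgType rat) k : (0 < k)%N -> logcoef R k * k%:R = (-1) ^+ k.-1.
Proof.
move=> k0; rewrite /logcoef -scalerAl mul1r -scaler_nat scalerA.
rewrite divfK; last by rewrite Num.Theory.pnatr_eq0 -lt0n.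
by rewrite -in_algE rmorphXn rmorphN1.
Qed.

Lemma natmul0 (R : comAlgType rat) (x : R) n : x *+ n.+1 = 0 -> x = 0.
Proof.
move=> H; have : ((n.+1)%:R : rat) *: x = 0 by rewrite scaler_nat.
move/(congr1 (fun y => ((n.+1)%:R : rat)^-1 *: y)); rewrite scalerA mulVf ?scale1r ?scaler0 //.
by rewrite Num.Theory.pnatr_eq0.
Qed.

Section Main.
Variables (R : comAlgType rat) (A : eqType) (circ : A -> A -> Lin R A).
Hypothesis ass : forall a b c : A,
     circL circ (circ a b) [:: (1, c)] =L circL circ [:: (1, a)] (circ b c).

Local Notation C := (circT circ).
Local Notation U := (Ut C 'X).
Local Notation S := (St C 'X).
Local Notation D := (Dt C).

Lemma U_add f g : U (fun u => f u + g u) = fun u => U f u + U g u.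
Proof. apply: functional_extensionality => u; rewrite /Ut /St pr_add; by rewrite addrACA opprD. Qed.
Lemma U_mul c f : U (fun u => c * f u) = fun u => c * U f u.
Proof. apply: functional_extensionality => u; by rewrite /Ut /St pr_mul mulrBr. Qed.
Lemma iterU_add k f g : iter k U (fun u => f u + g u) = fun u => iter k U f u + iter k U g u.
Proof. by elim: k => [|k IH] //; rewrite !iterS IH U_add. Qed.
Lemma iterU_mul k c f : iter k U (fun u => c * f u) = fun u => c * iter k U f u.
Proof. by elim: k => [|k IH] //; rewrite !iterS IH U_mul. Qed.
Lemma S_U g : S (U g) = U (S g).
Proof. apply: functional_extensionality => u; by rewrite /Ut /St pr_sub. Qed.
Lemma D_U g : D (U g) = U (D g).
Proof.
apply: functional_extensionality => u; rewrite /Ut /Dt /St pr_sub.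
by rewrite -/(St C 'X g) -/(Dt C g) (M3 (assC ass)).
Qed.
Lemma S_iterU k g : S (iter k U g) = iter k U (S g).
Proof. by elim: k => [|k IH] //; rewrite !iterS S_U IH. Qed.
Lemma D_iterU k g : D (iter k U g) = iter k U (D g).
Proof. by elim: k => [|k IH] //; rewrite !iterS D_U IH. Qed.

Lemma dU g u : (U g u)^`() = S (D g) u + U (fun v => (g v)^`()) u.
Proof.
rewrite /Ut derivB /St deriv_pr (dS ass).
by rewrite addrA.
Qed.

Lemma dIter h k u : (forall v, (h v)^`() = 0) ->
  (iter k U h u)^`() = k%:R * iter k.-1 U (S (D h)) u.
Proof.
move=> h0; elim: k u => [|k IH] u; first by rewrite /= h0 mul0r.
rewrite iterS dU.
have -> : (fun v => (iter k U h v)^`()) = (fun v => k%:R * iter k.-1 U (S (D h)) v).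
  by apply: functional_extensionality => v; rewrite IH.
rewrite U_mul D_iterU S_iterU /=.
case: k {IH} => [|k] /=; first by rewrite mul0r addr0 mul1r.
by rewrite -iterS -[(k.+2)%:R]natr1 mulrDl mul1r addrC.
Qed.

Lemma telescope (a : nat -> {poly R}) N :
  \sum_(k <- iota 1 N) (-1) ^+ k.-1 * (a k.-1 + a k) = a 0%N - (-1) ^+ N * a N.
Proof.
elim: N => [|N IH]; first by rewrite big_nil expr0 mul1r subrr.
have -> : iota 1 N.+1 = iota 1 N ++ [:: N.+1].
  by rewrite -[N.+1]addn1 iotaD add1n addn1.
rewrite big_cat /=. rewrite big_seq1 IH /= exprS mulN1r mulNr opprK.
by rewrite mulrDr addrA subrK.
Qed.

Lemma mainX w v N : (size w <= N)%N ->
  coefL (logpart C (fun k => (logcoef R k)%:P) 'X N w) v = 'X * (coefL (Dw circ w) v)%:P.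
Proof.
move=> HN.
set p := coefL _ v.
have Hp : p = \sum_(k <- iota 1 N) (logcoef R k)%:P * iter k U (delta _ v) w.
  by rewrite /p -pr_delta pr_logpart.
have h0 : forall u, (delta {poly R} v u)^`() = 0.
  by move=> u; rewrite /delta derivMn -polyC1 derivC mul0rn.
pose a j := iter j U (D (delta _ v)) w.
have aN : a N = 0.
  rewrite /a -D_iterU /Dt D_support // => u Hu; apply: NIL.
  exact: leq_trans Hu HN.
have dp : p^`() = (coefL (Dw circ w) v)%:P.
  rewrite Hp (big_morph _ (@derivD _) (@deriv0 _)).
  transitivity (\sum_(k <- iota 1 N) (-1) ^+ k.-1 * (a k.-1 + a k)).
    apply: eq_big_seq => k; rewrite mem_iota => /andP [k1 _].
    rewrite derivM derivC mul0r add0r dIter // mulrA -(rmorph_nat polyC) -polyCM logcoefK //.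
    rewrite rmorphXn rmorphN1; congr (_ * _).
    have -> : S (D (delta _ v)) = fun u => U (D (delta _ v)) u + D (delta _ v) u.
      by apply: functional_extensionality => u; rewrite /Ut subrK.
    rewrite iterU_add addrC /a; case: k k1 => // k _ /=; by rewrite -iterSr.
  rewrite telescope aN mulr0 subr0 /a /= /Dt pr_delta.
  rewrite -!pr_delta [RHS](tr_D polyC); apply: pr_eqf => u.
  by rewrite /delta rmorph_nat.
have p0 : p`_0 = 0.
  rewrite -horner_coef0 -horner_evalE Hp rmorph_sum big1_seq // => k /andP [_].
  rewrite mem_iota => /andP [k1 _].
  rewrite rmorphM /=.
  have := tr_U (horner_eval 0) C 'X k (delta _ v).
  move/(congr1 (fun F => F w)) => /= ->.
  by rewrite [horner_eval 0 'X]horner_evalE hornerX Ut0 // mulr0.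
apply/polyP => j; rewrite coefXM; case: j => [|i] //=.
have := congr1 (fun q : {poly R} => q`_i) dp; rewrite coef_deriv coefC /=.
case: i => [|i]; first by rewrite mulr1n => ->.
move=> /= H; exact: (natmul0 H).
Qed.
End Main.


Section Comb.
Variables (K : comPzRingType) (A : eqType) (circ : A -> A -> Lin K A).

Definition ctr (w : seq A) (i : nat) : Lin K (seq A) :=
  match drop i w with
  | b :: w'' => [seq (p.1, take i w ++ p.2) | p <- circW circ b w'']
  | [::] => [::]
  end.

Lemma ctr_cons a w i h : pr (ctr (a :: w) i.+1) h = pr (ctr w i) (fun u => h (a :: u)).
Proof.
rewrite /ctr /=; case: (drop i w) => [|b w'']; first by rewrite !pr_nil.
by rewrite (pr_relab (fun u => (a :: take i w) ++ u)) (pr_relab (fun u => take i w ++ u)).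
Qed.

Lemma Dw_ctr w h : pr (Dw circ w) h = \sum_(i <- iota 0 (size w).-1) pr (ctr w i) h.
Proof.
elim: w h => [|a w IH] h; first by rewrite prD0 big_nil.
rewrite prD1 IH /=.
case: w IH => [|b w] IH.
  by rewrite /= !big_nil pr_nil addr0.
rewrite /= big_cons addrC; congr (_ + _).
  by rewrite /ctr /= (pr_relab (fun u => [::] ++ u)).
rewrite -(addn0 1%N) iotaDl big_map; apply: eq_bigr => i _.
by rewrite add1n ctr_cons.
Qed.
End Comb.


Definition remn (n j : nat) : seq nat := [seq k <- iota 0 n.+1 | k != j].

Lemma remn_eq n i : (i.+2 <= n)%N -> remn n i.+1 = iota 0 i.+1 ++ iota i.+2 (n - i.+1).
Proof.
move=> Hi; rewrite /remn.
have -> : iota 0 n.+1 = iota 0 i.+1 ++ i.+1 :: iota i.+2 (n - i.+1).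
  have -> : n.+1 = (i.+1 + (n - i.+1).+1)%N by rewrite addnS subnKC // ltnW.
  by rewrite iotaD.
rewrite filter_cat; congr (_ ++ _).
  apply/all_filterP/allP => k; rewrite mem_iota /= => Hk; rewrite neq_ltn Hk //.
rewrite /= eqxx /=.
apply/all_filterP/allP => k; rewrite mem_iota => /andP [Hk _].
by rewrite neq_ltn Hk orbT.
Qed.

Lemma pairmap_iota (T : Type) (g : nat -> nat -> T) j k :
  pairmap g j (iota j.+1 k) = [seq g l l.+1 | l <- iota j k].
Proof. by elim: k j => [|k IH] j //=; rewrite IH. Qed.

Lemma last_iota j k : last j (iota j.+1 k) = (j + k)%N.
Proof.
elim: k j => [|k IH] j /=; first by rewrite addn0.
by rewrite IH addnS.
Qed.

Lemma drop_cons (A : Type) (w : seq A) j : (j < size w)%N ->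
  exists x, drop j w = x :: drop j.+1 w.
Proof.
move=> Hj; case E : (drop j w) => [|x s].
  by move: (congr1 size E); rewrite size_drop /= => /eqP; rewrite subn_eq0 leqNgt Hj.
by exists x; rewrite -[j.+1]add1n -drop_drop E /= drop0.
Qed.

Section Comb2.
Variables (K : comPzRingType) (A : eqType) (circ : A -> A -> Lin K A).
Local Notation single x := [:: ((1 : K), x)].

Lemma singles w j k : (j + k <= size w)%N ->
  [seq circs circ (take (l.+1 - l) (drop l w)) | l <- iota j k] = [seq single x | x <- take k (drop j w)].
Proof.
elim: k j => [|k IH] j Hjk; first by rewrite take0.
have [x Ex] : exists x, drop j w = x :: drop j.+1 w.
  by apply: drop_cons; apply: leq_trans Hjk; rewrite addnS ltnS leq_addr.
rewrite /= Ex subSnn /= IH ?take0 //; by rewrite addSn -addnS.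
Qed.

Lemma pr_prodz_nil h : pr (prodz [::] : Lin K (seq A)) h = h [::].
Proof. by rewrite /= pr_seq1 mul1r. Qed.

Lemma pr_prodz_cons b bs h :
  pr (prodz (b :: bs) : Lin K (seq A)) h = pr b (fun l => pr (prodz bs) (fun u => h (l :: u))).
Proof.
rewrite /= pr_flatten big_map /pr; apply: eq_bigr => p _.
rewrite big_map mulr_sumr; apply: eq_bigr => q _ /=; by rewrite mulrA.
Qed.

Lemma pr_prodz_singles s bs h :
  pr (prodz ([seq single x | x <- s] ++ bs) : Lin K (seq A)) h = pr (prodz bs) (fun u => h (s ++ u)).
Proof.
elim: s h => [|x s IH] h //.
have -> : [seq single y | y <- x :: s] ++ bs = single x :: ([seq single y | y <- s] ++ bs) by [].
by rewrite pr_prodz_cons pr_seq1 mul1r IH.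
Qed.

Lemma Con_ctr w i h : (i.+2 <= size w)%N ->
  pr (Con circ (remn (size w) i.+1) w) h = pr (ctr circ w i) h.
Proof.
move=> Hi; rewrite /Con remn_eq //.
set n := size w in Hi *.
set g := fun i0 j => circs circ (take (j - i0) (drop i0 w)).
have [b Eb] : exists b, drop i w = b :: drop i.+1 w by apply: drop_cons; exact: ltnW.
have [c Ec] : exists c, drop i.+1 w = c :: drop i.+2 w by apply: drop_cons.
have Em : (n - i.+1 = (n - i.+2).+1)%N by rewrite subnSK.
have Eblocks : pairmap g (head 0%N (iota 0 i.+1 ++ iota i.+2 (n - i.+1)))
                  (behead (iota 0 i.+1 ++ iota i.+2 (n - i.+1))) =
   [seq single x | x <- take i w] ++ (circL circ (single b) [:: (1, c)] :: [seq single x | x <- drop i.+2 w]).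
  rewrite /= pairmap_cat pairmap_iota last_iota add0n Em /= pairmap_iota.
  rewrite (singles (j := 0%N)) ?drop0 ?add0n; last exact: leq_trans (leqnSn _) (ltnW Hi).
  congr (_ ++ _ :: _).
    by rewrite /g -addn2 addKn Eb Ec /= take0.
  rewrite singles; last by rewrite subnKC.
  by rewrite take_oversize // size_drop.
rewrite Eblocks pr_prodz_singles pr_prodz_cons pr_circL !pr_seq1 !mul1r.
rewrite /ctr Eb Ec (pr_relab (fun u => take i w ++ u)) prC1.
apply: pr_eqf => l.
by rewrite -[[seq single x | x <- drop i.+2 w]]cats0 pr_prodz_singles pr_prodz_nil cats0.
Qed.
End Comb2.


Lemma mask_inj (T : eqType) (s : seq T) m1 m2 : uniq s -> size m1 = size s -> size m2 = size s ->
  mask m1 s = mask m2 s -> m1 = m2.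
Proof.
elim: s m1 m2 => [|x s IH] m1 m2.
  by move=> _ /size0nil -> /size0nil ->.
case: m1 => [|b1 m1] //; case: m2 => [|b2 m2] //.
move=> /= /andP [xs us] [s1] [s2].
case: b1; case: b2 => E.
- by case: E => /(IH _ _ us s1 s2) ->.
- have := @mem_mask _ x m2 s; rewrite -E mem_head => /(_ isT).
  by rewrite (negbTE xs).
- have := @mem_mask _ x m1 s; rewrite E mem_head => /(_ isT).
  by rewrite (negbTE xs).
- by rewrite (IH _ _ us s1 s2 E).
Qed.

Lemma mem_remn n j k : (k \in remn n j) = (k != j) && (k <= n)%N.
Proof. by rewrite /remn mem_filter mem_iota add0n ltnS. Qed.

Lemma size_remn n j : (j <= n)%N -> size (remn n j) = n.
Proof.
move=> Hj; rewrite /remn size_filter.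
have := count_predC (pred1 j) (iota 0 n.+1).
rewrite (count_uniq_mem _ (iota_uniq 0 n.+1)) mem_iota add0n ltnS Hj size_iota add1n => [[E]].
by rewrite -[in RHS]E.
Qed.

Lemma last_iotaS y j k : last y (iota j k.+1) = (j + k)%N.
Proof.
elim: k j y => [|k IH] j y; first by rewrite /= addn0.
change (last j (iota j.+1 k.+1) = (j + k.+1)%N); by rewrite IH addSnnS.
Qed.

Lemma Rn_perm n : perm_eq [seq r <- Rn n | sigma n r == 1%N] [seq remn n i.+1 | i <- iota 0 n.-1].
Proof.
apply: uniq_perm.
- rewrite filter_uniq // filter_uniq // map_inj_uniq ?enum_uniq //.
  move=> m1 m2 E; apply: val_inj; apply: (mask_inj (iota_uniq 0 n.+1)) => //; by rewrite size_tuple size_iota.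
- rewrite map_inj_in_uniq ?iota_uniq // => i j; rewrite !mem_iota !add0n => Hi Hj E.
  apply/eqP; apply/negPn/negP => Hij.
  have : i.+1 \in remn n j.+1 by rewrite mem_remn eqSS Hij /= (leq_trans Hi (leq_pred n)).
  by rewrite -E mem_remn eqxx.
move=> r; rewrite mem_filter /Rn mem_filter; apply/idP/idP.
  case/and3P => Hs /and5P [rn0 srt Hall Hhd Hlst] /imageP [m _ Er].
  have sub : forall k, k \in r -> (k <= n)%N.
    by move=> k; rewrite Er => /mem_mask; rewrite mem_iota add0n ltnS.
  have ur : uniq r by rewrite Er mask_uniq // iota_uniq.
  have sz : size r = n.
    have sp : (0 < size r)%N by case: (r) rn0.
    move/eqP: Hs sp; rewrite /sigma; case: (size r) => [|k] //= H _; lia.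
  have [x Hx Hxr] : exists2 x, x \in iota 0 n.+1 & x \notin r.
    apply/hasP; apply/negPn/negP => /hasPn H.
    have := uniq_leq_size (iota_uniq 0 n.+1) (fun k hk => negbNE (H k hk)).
    by rewrite size_iota sz ltnn.
  have Erx : r = remn n x.
    apply: (irr_sorted_eq ltn_trans ltnn) => //.
      by apply: (sorted_filter ltn_trans); exact: iota_ltn_sorted.
    have sub2 : {subset r <= remn n x}.
      by move=> k kr; rewrite mem_remn sub // andbT; apply: contraNneq Hxr => <-.
    have szle : (size (remn n x) <= size r)%N.
      by rewrite size_remn ?sz //; move: Hx; rewrite mem_iota.
    by have [_] := uniq_min_size ur sub2 szle.
  move: Hhd Hlst; case: r rn0 Erx Hxr {Er sub ur sz Hall srt Hs} => // y r' _ Erx Hxr /eqP Hy /eqP Hl.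
  have x0 : x != 0%N by apply: contraNneq Hxr => ->; rewrite -Hy mem_head.
  have xn : x != n.
    by apply: contraNneq Hxr => ->; rewrite -Hl /= mem_last.
  move: Hx; rewrite mem_iota add0n ltnS => Hx.
  apply/mapP; exists x.-1; last by rewrite prednK ?lt0n.
  rewrite mem_iota add0n /=.
  move/andP: Hx => [_ Hx]; move: x0 xn Hx; lia.
move=> /mapP [i]; rewrite mem_iota add0n => Hi ->.
have Hi2 : (i.+2 <= n)%N by move: Hi; lia.
apply/and3P; split.
- rewrite /sigma size_remn; last by apply: ltnW.
  apply/eqP; lia.
- apply/and5P; split.
  + by rewrite remn_eq.
  + by apply: (sorted_filter ltn_trans); exact: iota_ltn_sorted.
  + by apply/allP => k; rewrite mem_remn => /andP [].
  + by rewrite remn_eq.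
  + rewrite remn_eq // last_cat.
    have -> : (n - i.+1 = (n - i.+2).+1)%N by rewrite subnSK.
    by rewrite last_iotaS subnKC.
- have Hsz : size [seq k != i.+1 | k <- iota 0 n.+1] == n.+1 by rewrite size_map size_iota.
  apply/imageP; exists (Tuple Hsz) => //.
  by rewrite /remn filter_mask.
Qed.

Lemma comb (K : comPzRingType) (A : eqType) (circ : A -> A -> Lin K A) w h :
  pr (Dw circ w) h = pr (sumCon circ w) h.
Proof.
rewrite /sumCon pr_flatten big_map (perm_big _ (Rn_perm (size w))) big_map Dw_ctr.
apply: eq_big_seq => i; rewrite mem_iota add0n => /andP [_ Hi].
rewrite Con_ctr //; move: Hi; case: (size w) => // n; case: n => // n.
Qed.


Lemma nil_Dpow (K : comPzRingType) (A : eqType) (circ : A -> A -> Lin K A) t w k :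
  (size w < k)%N -> Dpow circ t k w =L [::].
Proof. by move=> Hk; apply: eqL_pr => v; rewrite pr_Dpow NIL // pr_nil. Qed.

Lemma ext_log (K : comPzRingType) (A : eqType) (circ : A -> A -> Lin K A) c t w N N' :
  (forall k, (N < k)%N -> Dpow circ t k w =L [::]) -> (N <= N')%N ->
  logpart circ c t N' w =L logpart circ c t N w.
Proof.
move=> H HN; apply: eqL_pr => v; rewrite !pr_logpart.
rewrite -(subnKC HN) iotaD big_cat /=.
rewrite [X in _ + X](_ : _ = 0) ?addr0 //.
rewrite big_seq big1 // => k; rewrite mem_iota => /andP [Hk _].
by rewrite -pr_Dpow (pr_eqL _ (H k _)) ?pr_nil ?mulr0 // -add1n.
Qed.

Lemma coef_sXP (R : comAlgType rat) (A : eqType) (s : Lin R (seq A)) v :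
  coefL (scaleL 'X (mapL (fun c => c%:P) s)) v = 'X * (coefL s v)%:P.
Proof. by rewrite -pr_delta pr_scale pr_delta (tr_coef polyC). Qed.

Unset Implicit Arguments. Set Strict Implicit.
Theorem proposition3p3 (R : comAlgType rat) (A : eqType)
  (circ : A -> A -> Lin R A)
  (circ_comm : forall a b : A, circ a b =L circ b a)
  (circ_assoc : forall a b c : A,
     circL circ (circ a b) [:: (1, c)] =L circL circ [:: (1, a)] (circ b c))
  (w : seq A) :
  (exists N : nat, forall k : nat, (N < k)%N -> Dpow (circT circ) 'X k w =L [::]) /\
  (exists M : nat, forall k : nat, (M < k)%N -> Dpow circ 1 k w =L [::]) /\
  (forall N M : nat,
     (forall k : nat, (N < k)%N -> Dpow (circT circ) 'X k w =L [::]) ->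
     (forall k : nat, (M < k)%N -> Dpow circ 1 k w =L [::]) ->
     logpart (circT circ) (fun k => (logcoef R k)%:P) 'X N w
       =L scaleL 'X (mapL (fun c => c%:P) (sumCon circ w))
     /\ scaleL 'X (mapL (fun c => c%:P) (sumCon circ w))
       =L scaleL 'X (mapL (fun c => c%:P) (logpart circ (logcoef R) 1 M w))).
Proof.
split; first by exists (size w) => k; apply: nil_Dpow.
split; first by exists (size w) => k; apply: nil_Dpow.
move=> N M HN HM.
have cs : forall v, coefL (Dw circ w) v = coefL (sumCon circ w) v.
  by move=> v; rewrite -!pr_delta comb.
split.
  move=> v; rewrite coef_sXP -cs -(ext_log _ HN (leq_addr (size w) N)).
  by rewrite (mainX circ_assoc) // leq_addl.
move=> v; rewrite !coef_sXP; congr (_ * _%:P).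
rewrite -(ext_log _ HM (leq_addr (size w) M)) -cs.
have := mainX circ_assoc v (leq_addl M (size w)).
move/(congr1 (horner_eval 1)).
have E1 : horner_eval 1 ('X * (coefL (Dw circ w) v)%:P) = coefL (Dw circ w) v.
  by rewrite horner_evalE hornerM hornerX hornerC mul1r.
rewrite E1 => <-.
rewrite -!pr_delta !pr_logpart rmorph_sum.
apply: eq_bigr => k _; rewrite rmorphM; congr (_ * _); first exact: hornerC.
have := tr_U (horner_eval 1) (circT circ) 'X k (delta _ v).
move/(congr1 (fun F => F w)) => /= ->.
have -> : mapc (horner_eval 1) (circT circ) = circ.
  apply: functional_extensionality => a; apply: functional_extensionality => b.
  rewrite /mapc /circT /mapL -map_comp; elim: (circ a b) => //= [[c l] x] ->.
  by rewrite horner_evalE hornerC.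
rewrite [horner_eval 1 'X]horner_evalE hornerX; congr (iter _ _ _ _).
by apply: functional_extensionality => u; rewrite /delta rmorph_nat.
Qed.
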